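(* Let $M\in\mathbb{N}$, $r\in\{1,\dots,M\}$, let $C\in\mathbb{R}^{M\times M}$ have singular values $\lambda_1\ge\dots\ge\lambda_M$, let $E\in\mathbb{R}^{M\times M}$ be any matrix with largest singular value $\sigma_1$, and let $\pi_r\in\mathcal{S}_{M,r}$ maximize $\|\tilde\pi_r C\|_{S_2}$ over $\mathcal{S}_{M,r}$. Define for $\tilde\pi_r\in\mathcal{S}_{M,r}$ $$Z^1_{\tilde\pi_r}:=\|\tilde\pi_r C\|_{S_2}^2-\|\pi_r C\|_{S_2}^2+2\operatorname{tr}\big(E^T(\tilde\pi_r-\pi_r)C\big).$$ Then $\sup_{\tilde\pi_r\in\mathcal{S}_{M,r}}Z^1_{\tilde\pi_r}\le\min(\mathrm{I}',\mathrm{II}',\mathrm{III}')$, where $$\mathrm{I}'=4r_M\lambda_1\sigma_1,$$ $$\mathrm{II}'=4r_M\frac{\lambda_1^2}{\lambda_r^2-\lambda_{r+1}^2}\sigma_1^2\ \text{ if }\lambda_r>\lambda_{r+1},\qquad \mathrm{II}'=\infty\ \text{ if }\lambda_r=\lambda_{r+1},$$ $$\mathrm{III}'=\max\Big(4\sqrt{r_M\Delta_r}\,\frac{\lambda_1}{\lambda_r}\sigma_1,\ 8r_M\frac{\lambda_1^2}{\lambda_r^2}\sigma_1^2\Big)\ \text{ if }\lambda_r>0,\qquad \mathrm{III}'=\infty\ \text{ if }\lambda_r=0.$$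
   Context: $\mathcal{S}_{M,r}$ denotes the set of all orthogonal projections of rank $r$ onto subspaces of $\mathbb{R}^M$. $r_M:=\min(r,M-r)$, $\Delta_r:=\sum_{i=r+1}^{2r}\lambda_i^2$ with the convention $\lambda_i:=0$ for $i>M$. $\|\cdot\|_{S_2}$ is the Hilbert–Schmidt norm. *)

(* Defs.v *)
From HB Require Import structures.
From mathcomp Require Import all_boot all_order all_algebra.
Set Implicit Arguments. Unset Strict Implicit. Unset Printing Implicit Defensive.
Import Order.TTheory GRing.Theory Num.Theory.
Local Open Scope ring_scope.

Section Defs.
Variable R : rcfType.

(* 1-based access to a list of singular values, with lam_ s i = 0 for i > size s *)
Definition lam_ (s : seq R) (i : nat) : R := nth 0 s i.-1.

Definition is_svals (M : nat) (C : 'M[R]_M) (s : seq R) : Prop :=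
  [/\ size s = M, sorted (fun x y => y <= x) s, all (fun x => 0 <= x) s &
   exists U V : 'M[R]_M,
     [/\ U^T *m U = 1%:M, V^T *m V = 1%:M &
         C = U *m diag_mx (\row_(i < M) s`_i) *m V^T]].

Definition is_orth_proj (M r : nat) (P : 'M[R]_M) : Prop :=
  [/\ P^T = P, P *m P = P & \rank P = r].

Definition hs2 (M : nat) (A : 'M[R]_M) : R := \tr (A^T *m A).

Definition Delta (s : seq R) (r : nat) : R :=
  \sum_(r.+1 <= i < (2 * r).+1) lam_ s i ^+ 2.

Definition Z1 (M : nat) (C E P pi : 'M[R]_M) : R :=
  hs2 (P *m C) - hs2 (pi *m C) + 2 * \tr (E^T *m (P - pi) *m C).

End Defs.

(* Main.v *)
Require Import Defs.
From HB Require Import structures.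
From mathcomp Require Import all_boot all_order all_algebra.
From mathcomp Require Import ring lra.
Import Order.TTheory GRing.Theory Num.Theory.
Local Open Scope ring_scope.
Set Implicit Arguments. Unset Strict Implicit. Unset Printing Implicit Defensive.

Section Aux.
Variable R : rcfType.
Variable n : nat.
Implicit Types (X Y Z Q : 'M[R]_n).

Definition psd (X : 'M[R]_n) := exists k (G : 'M[R]_(k, n)), X = G^T *m G.

Lemma tr_TT_ge0 k (G : 'M[R]_(k,n)) : 0 <= \tr (G^T *m G).
Proof.
rewrite /mxtrace; apply: sumr_ge0 => i _; rewrite mxE; apply: sumr_ge0 => j _.
by rewrite mxE -expr2 sqr_ge0.
Qed.

Lemma tr_TT_eq0 k (G : 'M[R]_(k,n)) : \tr (G^T *m G) = 0 -> G = 0.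
Proof.
rewrite /mxtrace => H; apply/matrixP => j i; rewrite [RHS]mxE.
have inner : forall i0, 0 <= (G^T *m G) i0 i0.
  by move=> i0; rewrite mxE; apply: sumr_ge0 => j0 _; rewrite mxE -expr2 sqr_ge0.
have H1 := psumr_eq0P (fun i0 _ => inner i0) H (i := i) isT.
move: H1; rewrite mxE => H2.
have nn : forall j0 : 'I_k, 0 <= G^T i j0 * G j0 i.
  by move=> j0; rewrite mxE -expr2 sqr_ge0.
have := psumr_eq0P (fun j0 _ => nn j0) H2 (i := j) isT.
by rewrite mxE -expr2 => /eqP; rewrite sqrf_eq0 => /eqP.
Qed.

Lemma psd_tr X : psd X -> 0 <= \tr X.
Proof. by case=> k [G ->]; apply: tr_TT_ge0. Qed.

Lemma psd_cong X Z : psd X -> psd (Z^T *m X *m Z).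
Proof.
case=> k [G ->]; exists k, (G *m Z).
by rewrite trmx_mul !mulmxA.
Qed.

Lemma psd_add X Y : psd X -> psd Y -> psd (X + Y).
Proof.
case=> k1 [G1 ->] [k2 [G2 ->]]; exists (k1 + k2)%N, (col_mx G1 G2).
by rewrite tr_col_mx mul_row_col.
Qed.

Lemma psd_scale c X : 0 <= c -> psd X -> psd (c *: X).
Proof.
move=> c0 [k [G ->]]; exists k, (Num.sqrt c *: G).
rewrite [(_ *: G)^T]linearZ /= -scalemxAl -scalemxAr scalerA -expr2 sqr_sqrtr //.
Qed.

Lemma psd_TT k (G : 'M[R]_(k, n)) : psd (G^T *m G).
Proof. by exists k, G. Qed.

Lemma psd_sym X : psd X -> X^T = X.
Proof. by case=> k [G ->]; rewrite trmx_mul trmxK. Qed.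

Lemma psd_cong_eq0 X Z : psd X -> \tr (Z^T *m X *m Z) = 0 -> X *m Z = 0.
Proof.
case=> k [G ->] H.
have : (G *m Z) = 0.
  by apply: tr_TT_eq0; rewrite trmx_mul !mulmxA; rewrite !mulmxA in H.
by rewrite -mulmxA => ->; rewrite mulmx0.
Qed.

Lemma psd_le_tr X Y Z : psd (Y - X) -> \tr (Z^T *m X *m Z) <= \tr (Z^T *m Y *m Z).
Proof.
move=> /(psd_cong Z) /psd_tr.
by rewrite mulmxBr mulmxBl linearB /= subr_ge0.
Qed.

Definition proj Q := Q^T = Q /\ Q *m Q = Q.

Lemma proj_psd Q : proj Q -> psd Q.
Proof. by case=> sQ iQ; exists n, Q; rewrite sQ iQ. Qed.

Lemma proj_compl Q : proj Q -> proj (1%:M - Q).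
Proof.
case=> sQ iQ; split; first by rewrite linearB /= trmx1 sQ.
by rewrite !mulmxBl !mulmxBr !mul1mx !mulmx1 iQ subrr subr0.
Qed.

Lemma tr_projC Q X : proj Q -> \tr (Q *m X *m Q) = \tr (Q *m X).
Proof. by case=> _ iQ; rewrite mxtrace_mulC mulmxA iQ. Qed.

Lemma tr_le_proj Q X Y : proj Q -> psd (Y - X) -> \tr (Q *m X) <= \tr (Q *m Y).
Proof.
move=> pQ /(psd_le_tr Q); case: (pQ) => sQ _; rewrite sQ.
by rewrite !tr_projC.
Qed.

Lemma tr_ge0_proj Q X : proj Q -> psd X -> 0 <= \tr (Q *m X).
Proof.
move=> pQ /(psd_cong Q) /psd_tr; case: (pQ) => sQ _; rewrite sQ.
by rewrite tr_projC.
Qed.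

Definition hs (X : 'M[R]_n) := \tr (X^T *m X).

Lemma CS_real (p q s : R) : 0 <= p -> 0 <= q ->
  (forall t, 0 <= p - 2 * t * s + t ^+ 2 * q) -> s ^+ 2 <= p * q.
Proof.
move=> p0 q0 H.
have [q_eq0|q_gt0] := eqVneq q 0.
  have [s_eq0|s_ne0] := eqVneq s 0; first by rewrite s_eq0 q_eq0 expr0n /= mulr0.
  have := H ((p + 1) / (2 * s)); rewrite q_eq0 mulr0 addr0.
  have -> : 2 * ((p + 1) / (2 * s)) * s = p + 1.
    by field.
  move=> h; exfalso; move: h; apply/negP; rewrite -ltNge; lra.
have qp : 0 < q by rewrite lt_def q_gt0 q0.
have := H (s / q).
have -> : p - 2 * (s / q) * s + (s / q) ^+ 2 * q = (p * q - s ^+ 2) / q by field.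
by rewrite pmulr_lge0 ?invr_gt0 // subr_ge0.
Qed.

Lemma trmx_subZ X Y (t : R) : (X - t *: Y)^T = X^T - t *: Y^T.
Proof. by rewrite raddfB /= linearZ. Qed.

Lemma CS_tr X Y : \tr (X^T *m Y) ^+ 2 <= hs X * hs Y.
Proof.
apply: CS_real; rewrite /hs ?tr_TT_ge0 // => t.
have := tr_TT_ge0 (X - t *: Y).
rewrite trmx_subZ mulmxBl !mulmxBr -!scalemxAl -!scalemxAr !raddfB /= !mxtraceZ.
have e : \tr (Y^T *m X) = \tr (X^T *m Y).
  by rewrite -mxtrace_tr trmx_mul trmxK.
rewrite e; set a := \tr (X^T *m X); set b := \tr (X^T *m Y); set c := \tr (Y^T *m Y).
suff -> : a - t * b + (- (t * b) - - (t * (t * c))) = a - 2 * t * b + t ^+ 2 * c by [].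
by ring.
Qed.

Definition Ud (U : 'M[R]_n) (w : 'I_n -> R) := U *m diag_mx (\row_i w i) *m U^T.

Lemma Ud_ext U w w' : (forall i, w i = w' i) -> Ud U w = Ud U w'.
Proof. by move=> e; rewrite /Ud; congr (_ *m diag_mx _ *m _); apply/rowP => i; rewrite !mxE e. Qed.

Lemma Ud_sym U w : (Ud U w)^T = Ud U w.
Proof. by rewrite /Ud !trmx_mul trmxK tr_diag_mx mulmxA. Qed.

Lemma Ud_mul U w w' : U^T *m U = 1%:M -> Ud U w *m Ud U w' = Ud U (fun i => w i * w' i).
Proof.
move=> oU; rewrite /Ud !mulmxA -[U *m _ *m U^T *m U]mulmxA oU mulmx1 -[U *m _ *m _]mulmxA mulmx_diag.
by congr (_ *m diag_mx _ *m _); apply/rowP => i; rewrite !mxE.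
Qed.

Lemma Ud_B U w w' : Ud U w - Ud U w' = Ud U (fun i => w i - w' i).
Proof.
rewrite /Ud -mulmxBl -mulmxBr -linearB /=; congr (_ *m diag_mx _ *m _).
by apply/rowP => i; rewrite !mxE.
Qed.

Lemma Ud_D U w w' : Ud U w + Ud U w' = Ud U (fun i => w i + w' i).
Proof.
rewrite /Ud -mulmxDl -mulmxDr -linearD /=; congr (_ *m diag_mx _ *m _).
by apply/rowP => i; rewrite !mxE.
Qed.

Lemma Ud_Z U w c : c *: Ud U w = Ud U (fun i => c * w i).
Proof.
rewrite /Ud scalemxAl scalemxAr -linearZ /=; congr (_ *m diag_mx _ *m _).
by apply/rowP => i; rewrite !mxE.
Qed.

Lemma Ud_const U c : U *m U^T = 1%:M -> Ud U (fun _ => c) = c%:M.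
Proof.
move=> oU; rewrite /Ud.
have -> : \row_(i < n) c = const_mx c by apply/rowP => i; rewrite !mxE.
by rewrite diag_const_mx mul_mx_scalar -scalemxAl oU scalemx1.
Qed.

Lemma Ud_tr U w : U^T *m U = 1%:M -> \tr (Ud U w) = \sum_i w i.
Proof.
move=> oU; rewrite /Ud mxtrace_mulC mulmxA oU mul1mx mxtrace_diag.
by apply: eq_bigr => i _; rewrite mxE.
Qed.

Lemma Ud_psd U w : (forall i, 0 <= w i) -> psd (Ud U w).
Proof.
move=> w0; exists n, (diag_mx (\row_i Num.sqrt (w i)) *m U^T).
rewrite trmx_mul trmxK tr_diag_mx /Ud !mulmxA -[_ *m diag_mx _ *m diag_mx _]mulmxA mulmx_diag.
congr (_ *m diag_mx _ *m _); apply/rowP => i; rewrite !mxE -expr2 sqr_sqrtr //.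
Qed.

Lemma sum_trunc (f : nat -> R) m k :
  (forall i, (minn m k <= i)%N -> (i < maxn m k)%N -> f i = 0) ->
  \sum_(0 <= i < m) f i = \sum_(0 <= i < k) f i.
Proof.
move=> H; case: (leqP m k) => mk.
  rewrite [RHS](@big_cat_nat _ _ _ m 0 k xpredT f (leq0n m) mk) /=.
  have -> : \sum_(m <= i < k) f i = 0; last by rewrite addr0.
  rewrite big_nat_cond big1 // => i /andP[/andP[h1 h2] _]; apply: H.
    by rewrite (minn_idPl mk).
  by rewrite (maxn_idPr mk).
have km := ltnW mk.
rewrite [LHS](@big_cat_nat _ _ _ k 0 m xpredT f (leq0n k) km) /=.
have -> : \sum_(k <= i < m) f i = 0; last by rewrite addr0.
rewrite big_nat_cond big1 // => i /andP[/andP[h1 h2] _]; apply: H.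
  by rewrite (minn_idPr km).
by rewrite (maxn_idPl km).
Qed.

Lemma sum_ord_nat (f : nat -> R) m : \sum_(i < m) f i = \sum_(0 <= i < m) f i.
Proof. by rewrite big_mkord. Qed.

Lemma tr_pid k : (k <= n)%N -> \tr (pid_mx k : 'M[R]_n) = k%:R.
Proof.
move=> kn; rewrite /mxtrace (eq_bigr (fun i : 'I_n => ((i < k)%N)%:R : R)); last first.
  by move=> i _; rewrite mxE eqxx.
rewrite (sum_ord_nat (fun i => ((i < k)%N)%:R)) (sum_trunc (k := k)); last first.
  move=> i; rewrite (minn_idPr kn) => ki _; by rewrite ltnNge ki.
rewrite big_nat_cond (eq_bigr (fun _ => 1)); last by move=> i /andP[/andP[_ ->]].
by rewrite -big_nat_cond sumr_const_nat subn0.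
Qed.

Lemma tr_idem (P : 'M[R]_n) : P *m P = P -> \tr P = (\rank P)%:R.
Proof.
move=> iP.
set L := col_ebase P; set W := row_ebase P; set J := (pid_mx (\rank P) : 'M[R]_n).
have e : L *m J *m W = P by exact: mulmx_ebase.
have uL : L \in unitmx by exact: col_ebase_unit.
have uW : W \in unitmx by exact: row_ebase_unit.
have key : J *m (W *m L) *m J = J.
  have : invmx L *m (P *m P) *m invmx W = invmx L *m P *m invmx W by rewrite iP.
  rewrite -{1 2 3}e !mulmxA mulVmx // mul1mx -!mulmxA mulmxV // mulmx1.
  by rewrite !mulmxA.
have rn : (\rank P <= n)%N by exact: rank_leq_row.
have JJ : J *m J = J by exact: pid_mx_id.
have -> : \tr P = \tr (J *m (W *m L) *m J).
  rewrite -e mxtrace_mulC mulmxA mxtrace_mulC -{1}JJ -mulmxA.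
  by rewrite mxtrace_mulC [RHS]mxtrace_mulC !mulmxA.
by rewrite key tr_pid.
Qed.

Lemma hs_ge0 X : 0 <= hs X.
Proof. exact: tr_TT_ge0. Qed.

Lemma tr_scal_proj Q c : \tr (Q *m (c *: 1%:M)) = c * \tr Q.
Proof. by rewrite -scalemxAr mulmx1 mxtraceZ. Qed.

Lemma T_bound_left Q E X (s : R) (k : R) : proj Q -> \tr Q = k ->
  psd (s ^+ 2 *: 1%:M - E *m E^T) -> Q *m X = X ->
  \tr (E^T *m X) ^+ 2 <= k * s ^+ 2 * hs X.
Proof.
move=> pQ trQ pE QX; case: (pQ) => sQ iQ.
have -> : \tr (E^T *m X) = \tr ((Q *m E)^T *m X).
  by rewrite trmx_mul sQ -mulmxA QX.
apply: (le_trans (CS_tr _ _)); apply: ler_wpM2r; first exact: hs_ge0.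
rewrite /hs trmx_mul sQ -mulmxA (mulmxA Q Q E) iQ mxtrace_mulC -mulmxA.
by have := tr_le_proj pQ pE; rewrite tr_scal_proj trQ mulrC.
Qed.

Lemma T_bound_right Q E X (s : R) (k : R) : proj Q -> \tr Q = k ->
  psd (s ^+ 2 *: 1%:M - E^T *m E) -> X *m Q = X ->
  \tr (E^T *m X) ^+ 2 <= k * s ^+ 2 * hs X.
Proof.
move=> pQ trQ pE XQ; case: (pQ) => sQ iQ.
have -> : \tr (E^T *m X) = \tr ((E *m Q)^T *m X).
  by rewrite -{1}XQ mulmxA mxtrace_mulC mulmxA trmx_mul sQ.
apply: (le_trans (CS_tr _ _)); apply: ler_wpM2r; first exact: hs_ge0.
rewrite /hs trmx_mul sQ.
have := tr_le_proj pQ pE; rewrite tr_scal_proj trQ mulrC => H.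
apply: le_trans H; rewrite mulmxA mxtrace_mulC !mulmxA iQ -mulmxA. done.
Qed.

End Aux.

Section SV.
Variable R : rcfType.

Lemma seq_ge0 (s : seq R) : all (fun x => 0 <= x) s -> forall i, 0 <= s`_i.
Proof.
move=> /allP al i; case: (ltnP i (size s)) => h; first by apply: al; exact: mem_nth.
by rewrite nth_default.
Qed.

Lemma seq_mono (s : seq R) : sorted (fun x y => y <= x) s -> all (fun x => 0 <= x) s ->
  forall i j, (i <= j)%N -> s`_j <= s`_i.
Proof.
move=> so al i j ij; case: (ltnP j (size s)) => hj.
  have hi : (i < size s)%N by apply: leq_ltn_trans hj.
  have tr : transitive (fun x y : R => y <= x) by move=> x y z /= h1 h2; apply: le_trans h1.
  have rf : reflexive (fun x y : R => y <= x) by move=> x /=.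
  exact: (@sorted_leq_nth R (fun x y => y <= x) tr rf 0 s so i j hi hj ij).
by rewrite (nth_default _ hj); apply: seq_ge0.
Qed.

Lemma seq_mono2 (s : seq R) : sorted (fun x y => y <= x) s -> all (fun x => 0 <= x) s ->
  forall i j, (i <= j)%N -> s`_j ^+ 2 <= s`_i ^+ 2.
Proof.
move=> so al i j ij; have h1 := seq_mono so al ij; have h2 := seq_ge0 al j.
by rewrite ler_pXn2r // ?nnegrE ?seq_ge0 //.
Qed.

Variable n : nat.

Lemma svd_facts (C : 'M[R]_n) (s : seq R) : is_svals C s ->
  exists U V : 'M[R]_n,
    [/\ U^T *m U = 1%:M, U *m U^T = 1%:M, V^T *m V = 1%:M, V *m V^T = 1%:M &
     [/\ C = U *m diag_mx (\row_i s`_i) *m V^T,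
         C *m C^T = Ud U (fun i => s`_i ^+ 2) &
         C^T *m C = Ud V (fun i => s`_i ^+ 2)]].
Proof.
case=> _ _ _ [U [V [oU oV eC]]]; exists U, V.
have oU' := mulmx1C oU; have oV' := mulmx1C oV.
split=> //; split=> //.
  rewrite eC !trmx_mul !trmxK tr_diag_mx /Ud !mulmxA -(mulmxA _ V^T V) oV mulmx1.
  rewrite -(mulmxA _ (diag_mx _) (diag_mx _)) mulmx_diag.
  by congr (_ *m diag_mx _ *m _); apply/rowP => i; rewrite !mxE expr2.
rewrite eC !trmx_mul !trmxK tr_diag_mx /Ud !mulmxA -(mulmxA _ U^T U) oU mulmx1.
rewrite -(mulmxA _ (diag_mx _) (diag_mx _)) mulmx_diag.
by congr (_ *m diag_mx _ *m _); apply/rowP => i; rewrite !mxE expr2.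
Qed.

Lemma svd_bound (C : 'M[R]_n) (s : seq R) : is_svals C s ->
  psd (s`_0 ^+ 2 *: 1%:M - C *m C^T) /\ psd (s`_0 ^+ 2 *: 1%:M - C^T *m C).
Proof.
move=> sv; have [_ so al _] := sv.
have [U [V [oU oU' oV oV' [_ eA eB]]]] := svd_facts sv.
have nn : forall i : 'I_n, 0 <= s`_0 ^+ 2 - s`_i ^+ 2.
  by move=> i; rewrite subr_ge0; apply: seq_mono2.
split.
  rewrite eA (_ : s`_0 ^+ 2 *: 1%:M = Ud U (fun _ => s`_0 ^+ 2)); last first.
    by rewrite Ud_const // scalemx1.
  by rewrite Ud_B; apply: Ud_psd => i; apply: nn.
rewrite eB (_ : s`_0 ^+ 2 *: 1%:M = Ud V (fun _ => s`_0 ^+ 2)); last first.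
  by rewrite Ud_const // scalemx1.
by rewrite Ud_B; apply: Ud_psd => i; apply: nn.
Qed.

End SV.

Section Main.
Variables (R : rcfType) (n r : nat) (C pi U : 'M[R]_n) (lam : seq R).
Hypotheses (rn : (r <= n)%N) (so : sorted (fun x y => y <= x) lam)
  (al : all (fun x => 0 <= x) lam)
  (ppi : proj pi) (trpi : \tr pi = r%:R)
  (oU : U^T *m U = 1%:M) (oU' : U *m U^T = 1%:M)
  (eA : C *m C^T = Ud U (fun i => lam`_i ^+ 2)).

Let a (i : nat) := lam`_i ^+ 2.
Let c := a r.-1.
Definition pi0 := Ud U (fun i : 'I_n => ((i < r)%N)%:R : R).
Hypothesis hmax0 : \tr (pi0 *m (C *m C^T)) <= \tr (pi *m (C *m C^T)).

Lemma a_ge0 i : 0 <= a i.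
Proof. exact: sqr_ge0. Qed.

Lemma a_mono i j : (i <= j)%N -> a j <= a i.
Proof. exact: seq_mono2. Qed.

Lemma tr_Ud_nat (f : nat -> R) : \tr (Ud U (fun i : 'I_n => f i)) = \sum_(0 <= i < n) f i.
Proof. by rewrite Ud_tr // sum_ord_nat. Qed.

Definition Sr := \sum_(0 <= i < r) a i.

Lemma tr_pi0A : \tr (pi0 *m (C *m C^T)) = Sr.
Proof.
rewrite eA /pi0 Ud_mul // (tr_Ud_nat (fun i => ((i < r)%N)%:R * a i)) (sum_trunc (k := r)); last first.
  by move=> i; rewrite (minn_idPr rn) => ri _; rewrite ltnNge ri mul0r.
by apply: eq_big_nat => i /andP[_ ->]; rewrite mul1r.
Qed.

Definition Fp := Ud U (fun i : 'I_n => Num.max (a i - c) 0).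
Definition Fm := Ud U (fun i : 'I_n => Num.max (c - a i) 0).

Lemma A_dec : C *m C^T = c *: 1%:M + Fp - Fm.
Proof.
rewrite eA /Fp /Fm scalemx1 -(Ud_const c oU') Ud_D Ud_B; apply: Ud_ext => i.
rewrite /a; set x := lam`_i ^+ 2; case: (leP c x) => h.
  by rewrite [Num.max (x - c) 0]max_l ?subr_ge0 // [Num.max (c - x) 0]max_r ?subr_le0 //; ring.
rewrite [Num.max (x - c) 0]max_r ?subr_le0 ?(ltW h) // [Num.max (c - x) 0]max_l ?subr_ge0 ?(ltW h) //; ring.
Qed.

Lemma tr_Fp : \tr Fp = Sr - c * r%:R.
Proof.
rewrite /Fp (tr_Ud_nat (fun i => Num.max (a i - c) 0)) (sum_trunc (k := r)); last first.
  move=> i; rewrite (minn_idPr rn) => ri _; apply: max_r; rewrite subr_le0.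
  by apply: a_mono; apply: leq_trans ri; apply: leq_pred.
rewrite (eq_big_nat _ _ (F2 := fun i => a i - c)); last first.
  move=> i /andP[_ ir]; apply: max_l; rewrite subr_ge0; apply: a_mono.
  by rewrite -ltnS; case: (r) ir => //.
by rewrite sumrB sumr_const_nat subn0 /Sr mulr_natr.
Qed.

Lemma Fp_psd : psd Fp.
Proof. by apply: Ud_psd => i; rewrite le_max lexx orbT. Qed.
Lemma Fm_psd : psd Fm.
Proof. by apply: Ud_psd => i; rewrite le_max lexx orbT. Qed.

Lemma proj_pi0 : proj pi0.
Proof.
split; first by rewrite Ud_sym.
rewrite /pi0 Ud_mul //; apply: Ud_ext => i; by case: (i < r)%N; rewrite ?mul1r ?mul0r.
Qed.

Lemma tr_pi0 : \tr pi0 = r%:R.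
Proof.
rewrite (tr_Ud_nat (fun i => ((i < r)%N)%:R)) (sum_trunc (k := r)); last first.
  by move=> i; rewrite (minn_idPr rn) => ri _; rewrite ltnNge ri.
rewrite (eq_big_nat _ _ (F2 := fun i => 1)); last by move=> i /andP[_ ->].
by rewrite sumr_const_nat subn0.
Qed.

Lemma step1 : [/\ \tr (pi *m (C *m C^T)) = Sr, Fp *m (1%:M - pi) = 0 & Fm *m pi = 0].
Proof.
have pc := proj_compl ppi; case: (ppi) => spi ipi; case: (pc) => spc ipc.
have t1 := tr_ge0_proj pc Fp_psd; have t2 := tr_ge0_proj ppi Fm_psd.
have e1 : \tr (pi *m (C *m C^T)) = c * r%:R + \tr Fp - \tr ((1%:M - pi) *m Fp) - \tr (pi *m Fm).
  rewrite A_dec mulmxBr mulmxDr !raddfB !raddfD /= tr_scal_proj trpi mulmxBl mul1mx raddfB /=. ring.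
have hh := hmax0; rewrite tr_pi0A e1 tr_Fp in hh.
have z1 : \tr ((1%:M - pi) *m Fp) = 0 by apply/eqP; rewrite eq_le t1 andbT; lra.
have z2 : \tr (pi *m Fm) = 0 by apply/eqP; rewrite eq_le t2 andbT; lra.
split.
- by rewrite e1 z1 z2 tr_Fp; ring.
- apply: psd_cong_eq0; first exact: Fp_psd.
  by rewrite spc tr_projC.
- apply: psd_cong_eq0; first exact: Fm_psd.
  by rewrite spi tr_projC.
Qed.

Lemma Fp_sym : Fp^T = Fp. Proof. exact: Ud_sym. Qed.
Lemma Fm_sym : Fm^T = Fm. Proof. exact: Ud_sym. Qed.

Lemma piF : [/\ pi *m Fp = Fp, Fp *m pi = Fp, pi *m Fm = 0 & Fm *m pi = 0].
Proof.
have [_ h1 h2] := step1; case: (ppi) => spi ipi.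
have e1 : Fp *m pi = Fp by move: h1; rewrite mulmxBr mulmx1 => /eqP; rewrite subr_eq0 => /eqP <-.
split=> //.
- by rewrite -{1}Fp_sym -spi -trmx_mul e1 Fp_sym.
- by rewrite -Fm_sym -spi -trmx_mul h2 trmx0.
Qed.

Lemma commute : pi *m (C *m C^T) = (C *m C^T) *m pi.
Proof.
have [h1 h2 h3 h4] := piF.
rewrite A_dec mulmxBr mulmxDr mulmxBl mulmxDl h1 h2 h3 h4 -scalemxAr -scalemxAl mulmx1 mul1mx.
by [].
Qed.

Lemma trA_pi : \tr (pi *m (C *m C^T)) = Sr.
Proof. by have [] := step1. Qed.

Lemma hsQC Q : proj Q -> hs (Q *m C) = \tr (Q *m (C *m C^T)).
Proof.
case=> sQ iQ; rewrite /hs trmx_mul sQ -mulmxA (mulmxA Q Q C) iQ mxtrace_mulC -mulmxA. done.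
Qed.

Lemma hsZC Z : hs (Z^T *m C) = \tr (Z^T *m (C *m C^T) *m Z).
Proof.
rewrite /hs trmx_mul trmxK mxtrace_mulC !mulmxA.
by rewrite mxtrace_mulC !mulmxA.
Qed.

Variable P : 'M[R]_n.
Hypotheses (pP : proj P) (trP : \tr P = r%:R).
Hypothesis psdA : psd (a 0 *: 1%:M - C *m C^T).

Definition h := \tr (P *m (1%:M - pi)).
Definition X1 := P *m (1%:M - pi) *m C.
Definition X2 := (1%:M - P) *m pi *m C.

Lemma X1_Z : X1 = ((1%:M - pi) *m P)^T *m C.
Proof.
case: (proj_compl ppi) => s1 _; case: pP => s2 _.
by rewrite trmx_mul s1 s2.
Qed.

Lemma X2_Z : X2 = (pi *m (1%:M - P))^T *m C.
Proof.
case: (proj_compl pP) => s1 _; case: ppi => s2 _.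
by rewrite trmx_mul s1 s2.
Qed.

Lemma h_alt : h = r%:R - \tr (P *m pi).
Proof. by rewrite /h mulmxBr mulmx1 raddfB /= trP. Qed.

Lemma trPpi_ge0 : 0 <= \tr (P *m pi).
Proof. exact: tr_ge0_proj pP (proj_psd ppi). Qed.

Lemma h_ge0 : 0 <= h.
Proof. exact: tr_ge0_proj pP (proj_psd (proj_compl ppi)). Qed.

Lemma h_le_r : h <= r%:R.
Proof. by rewrite h_alt; have := trPpi_ge0; lra. Qed.

Lemma h_le_nr : h <= (n - r)%:R.
Proof.
have e : h = (n - r)%:R - \tr ((1%:M - pi) *m (1%:M - P)).
  have e1 : \tr (1%:M - pi) = n%:R - r%:R by rewrite raddfB /= mxtrace1 trpi.
  have e2 : \tr ((1%:M - pi) *m (1%:M - P)) = \tr (1%:M - pi) - \tr ((1%:M - pi) *m P).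
    by rewrite mulmxBr mulmx1 raddfB.
  by rewrite e2 e1 natrB // /h mxtrace_mulC; ring.
have := tr_ge0_proj (proj_compl ppi) (proj_psd (proj_compl pP)).
by rewrite e; lra.
Qed.

Lemma trZZ1 : \tr (((1%:M - pi) *m P)^T *m ((1%:M - pi) *m P)) = h.
Proof.
have pc := proj_compl ppi; case: (pc) => s1 i1; case: (pP) => s2 i2.
rewrite trmx_mul s1 s2 !mulmxA -(mulmxA P _ _) i1.
by rewrite tr_projC.
Qed.

Lemma trZZ2 : \tr ((pi *m (1%:M - P))^T *m (pi *m (1%:M - P))) = h.
Proof.
have pc := proj_compl pP; case: (pc) => s1 i1; case: (ppi) => s2 i2.
rewrite trmx_mul s1 s2 !mulmxA -(mulmxA _ pi pi) i2 tr_projC //.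
rewrite h_alt mulmxBl mul1mx raddfB /= trpi.
by rewrite mxtrace_mulC.
Qed.

Lemma hs_le_h Z : \tr (Z^T *m Z) = h -> hs (Z^T *m C) <= a 0 * h.
Proof.
move=> e; rewrite hsZC; apply: le_trans (psd_le_tr Z psdA) _.
by rewrite -scalemxAr mulmx1 -scalemxAl mxtraceZ e.
Qed.

Lemma x2_le : hs X1 <= a 0 * h.
Proof. by rewrite X1_Z; apply: hs_le_h; exact: trZZ1. Qed.
Lemma y2_le : hs X2 <= a 0 * h.
Proof. by rewrite X2_Z; apply: hs_le_h; exact: trZZ2. Qed.

Lemma QcA : (1%:M - pi) *m (C *m C^T) = (C *m C^T) *m (1%:M - pi).
Proof. by rewrite mulmxBl mulmxBr mul1mx mulmx1 commute. Qed.

Lemma hs_diff : hs (P *m C) - hs (pi *m C) = hs X1 - hs X2.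
Proof.
set A := C *m C^T.
have pc := proj_compl ppi; case: (pc) => s1 i1.
have pPc := proj_compl pP; case: (pPc) => s3 i3.
case: (pP) => s2 i2; case: (ppi) => s4 i4.
rewrite (hsQC pP) (hsQC ppi) X1_Z X2_Z !hsZC.
have QAQ : (1%:M - pi) *m A *m (1%:M - pi) = A *m (1%:M - pi).
  by rewrite /A QcA -mulmxA i1.
have PAP : pi *m A *m pi = A *m pi.
  by rewrite /A commute -mulmxA i4.
have -> : ((1%:M - pi) *m P)^T *m A *m ((1%:M - pi) *m P)
    = P *m ((1%:M - pi) *m A *m (1%:M - pi)) *m P.
  by rewrite trmx_mul s1 s2 !mulmxA.
have -> : (pi *m (1%:M - P))^T *m A *m (pi *m (1%:M - P))
    = (1%:M - P) *m (pi *m A *m pi) *m (1%:M - P).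
  by rewrite trmx_mul s3 s4 !mulmxA.
rewrite QAQ PAP.
rewrite !tr_projC // !mulmxBr !mulmx1 !mulmxBl !mul1mx !raddfB /=.
rewrite [\tr (A *m pi)]mxtrace_mulC.
by rewrite -!mulmxA; ring.
Qed.

Lemma T_split (E : 'M[R]_n) :
  \tr (E^T *m (P - pi) *m C) = \tr (E^T *m X1) - \tr (E^T *m X2).
Proof.
rewrite -raddfB /= -mulmxBr -mulmxA; congr (\tr (E^T *m _)).
rewrite /X1 /X2 -mulmxBl; congr (_ *m C).
by rewrite !mulmxBr !mulmxBl !mulmx1 !mul1mx opprB addrA subrK.
Qed.

Variable V : 'M[R]_n.
Hypotheses (oV : V^T *m V = 1%:M) (oV' : V *m V^T = 1%:M)
  (eC : C = U *m diag_mx (\row_i lam`_i) *m V^T).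

Definition Pi := U^T *m pi *m U.
Definition pih := V *m Pi *m V^T.

Lemma diag_comm_sqrt (Pm : 'M[R]_n) :
  Pm *m diag_mx (\row_i (a i)) = diag_mx (\row_i (a i)) *m Pm ->
  Pm *m diag_mx (\row_i lam`_i) = diag_mx (\row_i lam`_i) *m Pm.
Proof.
move=> e; apply/matrixP => i j; rewrite mul_mx_diag mul_diag_mx !mxE.
move/matrixP: e => /(_ i j); rewrite mul_mx_diag mul_diag_mx !mxE => e.
have [z|nz] := eqVneq (Pm i j) 0; first by rewrite z mulr0 mul0r.
have aij : a j = a i by apply: (mulfI nz); rewrite e mulrC.
have hi := seq_ge0 al i; have hj := seq_ge0 al j.
move: aij; rewrite /a => /eqP; rewrite eqf_sqr => /orP[/eqP ->|/eqP ej].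
  by rewrite mulrC.
have j0 : lam`_j = 0 by lra.
have i0 : lam`_i = 0 by lra.
by rewrite i0 j0 mulr0 mul0r.
Qed.

Lemma PiD : Pi *m diag_mx (\row_i lam`_i) = diag_mx (\row_i lam`_i) *m Pi.
Proof.
apply: diag_comm_sqrt.
have := congr1 (fun X => U^T *m X *m U) commute.
rewrite eA /Ud /Pi !mulmxA oU mul1mx -!mulmxA oU mulmx1 !mulmxA.
by [].
Qed.

Lemma piC : pi *m C = C *m pih.
Proof.
have piU : pi *m U = U *m Pi by rewrite /Pi !mulmxA oU' mul1mx.
rewrite eC /pih !mulmxA piU -(mulmxA U Pi) PiD.
by rewrite -!mulmxA (mulmxA V^T V) oV mul1mx.
Qed.

Lemma proj_pih : proj pih.
Proof.
case: (ppi) => spi ipi; split.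
  by rewrite /pih /Pi !trmx_mul !trmxK spi !mulmxA.
rewrite /pih /Pi !mulmxA -(mulmxA _ V^T V) oV mulmx1 -(mulmxA _ U U^T) oU' mulmx1.
by rewrite -(mulmxA _ pi pi) ipi.
Qed.

Lemma tr_pih : \tr pih = r%:R.
Proof.
rewrite /pih /Pi mxtrace_mulC !mulmxA oV mul1mx mxtrace_mulC mulmxA oU' mul1mx.
exact: trpi.
Qed.

Lemma X1_right : X1 *m (1%:M - pih) = X1.
Proof.
have e : X1 = P *m C *m (1%:M - pih).
  by rewrite /X1 !mulmxBr !mulmxBl !mulmx1 -!mulmxA piC.
case: (proj_compl proj_pih) => _ i.
by rewrite e -mulmxA i.
Qed.

Lemma X2_right : X2 *m pih = X2.
Proof.
have e : X2 = (1%:M - P) *m C *m pih by rewrite /X2 -mulmxA piC mulmxA.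
case: proj_pih => _ i.
by rewrite e -mulmxA i.
Qed.

Lemma X1_left : P *m X1 = X1.
Proof. by case: (pP) => _ i; rewrite /X1 !mulmxA i. Qed.

Lemma X2_left : (1%:M - P) *m X2 = X2.
Proof. by case: (proj_compl pP) => _ i; rewrite /X2 !mulmxA i. Qed.

Variables (E : 'M[R]_n) (s : R).
Hypotheses (psdE1 : psd (s ^+ 2 *: 1%:M - E *m E^T))
  (psdE2 : psd (s ^+ 2 *: 1%:M - E^T *m E)).

Lemma tr_compl (Q : 'M[R]_n) : \tr Q = r%:R -> \tr (1%:M - Q) = (n - r)%:R.
Proof. by move=> e; rewrite raddfB /= mxtrace1 e (natrB R rn). Qed.

Lemma min_case (t : R) : t <= r%:R * s ^+ 2 -> t <= (n - r)%:R * s ^+ 2 ->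
  t <= (minn r (n - r))%:R * s ^+ 2.
Proof. by case: (leqP r (n - r)). Qed.

Lemma T1_bound : \tr (E^T *m X1) ^+ 2 <= (minn r (n - r))%:R * s ^+ 2 * hs X1.
Proof.
have hx := hs_ge0 X1.
suff : \tr (E^T *m X1) ^+ 2 / hs X1 <= (minn r (n - r))%:R * s ^+ 2 \/ hs X1 = 0.
  case=> [h|h0].
    have [z|nz] := eqVneq (hs X1) 0.
      by have := T_bound_left pP trP psdE1 X1_left; rewrite z !mulr0.
    by rewrite -ler_pdivrMr ?lt_def ?nz.
  by have := T_bound_left pP trP psdE1 X1_left; rewrite h0 !mulr0.
have [z|nz] := eqVneq (hs X1) 0; first by right.
left; have hp : 0 < hs X1 by rewrite lt_def nz.
apply: min_case; rewrite ler_pdivrMr //.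
  exact: T_bound_left pP trP psdE1 X1_left.
exact: T_bound_right (proj_compl proj_pih) (tr_compl tr_pih) psdE2 X1_right.
Qed.

Lemma T2_bound : \tr (E^T *m X2) ^+ 2 <= (minn r (n - r))%:R * s ^+ 2 * hs X2.
Proof.
have hx := hs_ge0 X2.
have [z|nz] := eqVneq (hs X2) 0.
  by have := T_bound_right proj_pih tr_pih psdE2 X2_right; rewrite z !mulr0.
have hp : 0 < hs X2 by rewrite lt_def nz.
rewrite -ler_pdivrMr //; apply: min_case; rewrite ler_pdivrMr //.
  exact: T_bound_right proj_pih tr_pih psdE2 X2_right.
exact: T_bound_left (proj_compl pP) (tr_compl trP) psdE1 X2_left.
Qed.

Hypothesis sz : size lam = n.

Let e := a (2 * r).-1.
Definition Hm := Ud U (fun i : 'I_n => Num.max (a i - e) 0).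

Lemma e_ge0 : 0 <= e. Proof. exact: a_ge0. Qed.

Lemma tr_Hm : \tr Hm = \sum_(0 <= i < 2 * r) (a i - e).
Proof.
rewrite /Hm (tr_Ud_nat (fun i => Num.max (a i - e) 0)) (sum_trunc (k := 2 * r)); last first.
  move=> i hi _; apply: max_r; rewrite subr_le0.
  case: (leqP (2 * r) i) => h2.
    by apply: a_mono; apply: leq_trans h2; apply: leq_pred.
  have ni : (n <= i)%N.
    move: hi; case: (leqP n (2 * r)) => hh hi //.
    by move: h2; rewrite ltnNge hi.
  by rewrite /a nth_default ?sz // expr0n /=; apply: e_ge0.
apply: eq_big_nat => i /andP[_ hi]; apply: max_l; rewrite subr_ge0; apply: a_mono.
by rewrite -ltnS; move: hi; case: (2 * r)%N.
Qed.

Lemma psd_HA : psd (Hm - (C *m C^T - e *: 1%:M)).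
Proof.
rewrite eA scalemx1 -(Ud_const e oU') /Hm !Ud_B; apply: Ud_psd => i.
by rewrite subr_ge0 le_max lexx.
Qed.

Lemma PQAQP (Z : 'M[R]_n) : proj P ->
  (((1%:M - pi) *m P)^T *m Z *m ((1%:M - pi) *m P))
    = P *m ((1%:M - pi) *m Z *m (1%:M - pi)) *m P.
Proof.
case=> s2 _; case: (proj_compl ppi) => s1 _.
by rewrite trmx_mul s1 s2 !mulmxA.
Qed.

Lemma tr_le_compl (N : 'M[R]_n) : psd N -> \tr (P *m N *m P) <= \tr N.
Proof.
move=> pN; rewrite tr_projC //.
have := tr_ge0_proj (proj_compl pP) pN.
by rewrite mulmxBl mul1mx raddfB /= subr_ge0.
Qed.

Lemma x2_Delta : hs X1 <= \sum_(r <= i < 2 * r) a i.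
Proof.
set A := C *m C^T.
have pc := proj_compl ppi; case: (pc) => s1 i1.
have step1' := step1; case: step1' => trpA _ _.
rewrite X1_Z hsZC.
have hpsd : psd (Hm + e *: 1%:M - A).
  have -> : Hm + e *: 1%:M - A = Hm - (A - e *: 1%:M).
    by rewrite opprB addrA addrAC.
  exact: psd_HA.
apply: (le_trans (psd_le_tr ((1%:M - pi) *m P) hpsd)).
rewrite mulmxDr mulmxDl raddfD /= -scalemxAr mulmx1 -scalemxAl mxtraceZ trZZ1.
rewrite PQAQP //.
have pN : psd ((1%:M - pi) *m Hm *m (1%:M - pi)).
  by have := psd_cong (1%:M - pi) (Ud_psd U (w := fun i : 'I_n => Num.max (a i - e) 0) _); rewrite s1; apply; move=> i; rewrite le_max lexx orbT.
apply: (le_trans (lerD (tr_le_compl pN) (lexx _))).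
rewrite tr_projC // mulmxBl mul1mx raddfB /=.
have hpi := tr_le_proj ppi psd_HA.
rewrite mulmxBr raddfB /= -scalemxAr mulmx1 mxtraceZ trpi trpA in hpi.
rewrite tr_Hm.
have eS : \sum_(0 <= i < 2 * r) (a i - e) = Sr + \sum_(r <= i < 2 * r) a i - e * (2 * r)%:R.
  rewrite sumrB sumr_const_nat subn0 /Sr (@big_cat_nat _ _ _ r 0 (2 * r)) //=.
    by rewrite mulr_natr.
  by rewrite mul2n -addnn leq_addr.
rewrite eS.
have hr := h_le_r; have he := e_ge0.
have : e * h <= e * r%:R by apply: ler_wpM2l.
rewrite natrM; lra.
Qed.

Lemma compl_pi0 : 1%:M - pi0 = Ud U (fun i : 'I_n => 1 - ((i < r)%N)%:R).
Proof. by rewrite -(Ud_const 1 oU') Ud_B. Qed.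

Lemma pi_eq_pi0 : a r < c -> pi = pi0.
Proof.
move=> bc.
have [_ _ h3 _] := piF.
have pp0 := proj_pi0; case: (pp0) => s0 i0.
case: (ppi) => spi ipi.
have hps : psd (Fm - (c - a r) *: (1%:M - pi0)).
  rewrite compl_pi0 Ud_Z /Fm Ud_B; apply: Ud_psd => i.
  case: (ltnP i r) => ir; first by rewrite subrr mulr0 subr0 le_max lexx orbT.
  rewrite subr0 mulr1 subr_ge0 le_max; apply/orP; left.
  by rewrite lerD2l lerN2; apply: a_mono.
have := tr_le_proj ppi hps; rewrite h3 mxtrace0 -scalemxAr mxtraceZ => hle.
have hge := tr_ge0_proj ppi (proj_psd (proj_compl pp0)).
have z : \tr (pi *m (1%:M - pi0)) = 0.
  apply/eqP; rewrite eq_le hge andbT.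
  have cb : 0 < c - a r by rewrite subr_gt0.
  by rewrite -(pmulr_rle0 _ cb).
have e1 : (1%:M - pi0) *m pi = 0.
  apply: psd_cong_eq0; first exact: proj_psd (proj_compl pp0).
  by rewrite spi tr_projC.
have e1' : pi = pi0 *m pi by move/eqP: e1; rewrite mulmxBl mul1mx subr_eq0 => /eqP.
have z2 : \tr (pi0 *m (1%:M - pi)) = 0.
  by rewrite mulmxBr mulmx1 raddfB /= -e1' tr_pi0 trpi subrr.
have e2 : (1%:M - pi) *m pi0 = 0.
  apply: psd_cong_eq0; first exact: proj_psd (proj_compl ppi).
  by rewrite s0 tr_projC.
have e2' : pi0 = pi *m pi0 by move/eqP: e2; rewrite mulmxBl mul1mx subr_eq0 => /eqP.
by have := congr1 trmx e1'; rewrite trmx_mul spi s0 -e2'.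
Qed.

Lemma trPcpi : \tr ((1%:M - P) *m pi) = h.
Proof. by rewrite h_alt mulmxBl mul1mx raddfB /= trpi mxtrace_mulC. Qed.

Lemma gap_x2 : a r < c -> hs X1 <= a r * h.
Proof.
move=> bc; have ep := pi_eq_pi0 bc.
rewrite X1_Z hsZC PQAQP //.
have hps : psd (a r *: (1%:M - pi) - (1%:M - pi) *m (C *m C^T) *m (1%:M - pi)).
  rewrite ep compl_pi0 eA !Ud_mul // Ud_Z Ud_B; apply: Ud_psd => i.
  case: (ltnP i r) => ir /=; first by lra.
  have := a_mono ir; rewrite /a; lra.
case: (pP) => sP _.
have := psd_le_tr P hps; rewrite sP -scalemxAr -scalemxAl mxtraceZ tr_projC //.
by rewrite [\tr (P *m (1%:M - pi) *m P)]tr_projC.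
Qed.

Lemma gap_y2 : a r < c -> c * h <= hs X2.
Proof.
move=> bc; have ep := pi_eq_pi0 bc.
rewrite X2_Z hsZC.
have -> : (pi *m (1%:M - P))^T *m (C *m C^T) *m (pi *m (1%:M - P))
   = (1%:M - P) *m (pi *m (C *m C^T) *m pi) *m (1%:M - P).
  case: (proj_compl pP) => s1 _; case: (ppi) => s2 _.
  by rewrite trmx_mul s1 s2 !mulmxA.
have hps : psd (pi *m (C *m C^T) *m pi - c *: pi).
  rewrite ep /pi0 eA !Ud_mul // Ud_Z Ud_B; apply: Ud_psd => i.
  case: (ltnP i r) => ir /=; last by lra.
  have : a r.-1 <= a i by apply: a_mono; rewrite -ltnS; move: ir; case: (r).
  rewrite /c /a; lra.
case: (proj_compl pP) => sP _.
have pc := proj_compl pP.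
have := psd_le_tr (1%:M - P) hps; rewrite sP -scalemxAr -scalemxAl mxtraceZ.
by rewrite !(tr_projC (Q := 1%:M - P)) // trPcpi.
Qed.

End Main.

Unset Implicit Arguments.

Section Arith.
Variable R : rcfType.

Lemma sq_le (u v : R) : 0 <= v -> u ^+ 2 <= v ^+ 2 -> u <= v.
Proof. move=> v0 h; case: (lerP u v) => // uv; exfalso; nra. Qed.

Lemma arithI (X Y a l1 sh sr T : R) : 0 <= X -> 0 <= Y -> 0 <= a -> 0 <= l1 -> 0 <= sh ->
  sh <= sr -> X <= l1 * sh -> Y <= l1 * sh -> X ^+ 2 <= Y ^+ 2 -> T <= a * (X + Y) ->
  X ^+ 2 - Y ^+ 2 + 2 * T <= 4 * a * l1 * sr.
Proof.
move=> X0 Y0 a0 l0 s0 ssr hX hY hXY hT.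
have h1 : a * (X + Y) <= a * (2 * (l1 * sh)) by apply: ler_wpM2l => //; lra.
have h2 : l1 * sh <= l1 * sr by apply: ler_wpM2l.
have h3 : a * (l1 * sh) <= a * (l1 * sr) by apply: ler_wpM2l.
nra.
Qed.

Lemma arithII (X Y a l1 sh b c T : R) : 0 <= X -> 0 <= Y -> 0 <= a -> 0 <= l1 -> 0 <= sh ->
  b < c -> X <= l1 * sh -> Y <= l1 * sh -> X ^+ 2 <= b * sh ^+ 2 -> c * sh ^+ 2 <= Y ^+ 2 ->
  T <= a * (X + Y) ->
  X ^+ 2 - Y ^+ 2 + 2 * T <= 4 * a ^+ 2 * (l1 ^+ 2 / (c - b)).
Proof.
move=> X0 Y0 a0 l0 s0 bc hX hY hXb hYc hT.
set g := c - b; have g0 : 0 < g by rewrite subr_gt0.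
have h1 : a * (X + Y) <= a * (2 * (l1 * sh)) by apply: ler_wpM2l => //; lra.
suff : g * (X ^+ 2 - Y ^+ 2 + 2 * T) <= 4 * a ^+ 2 * l1 ^+ 2.
  move=> H; rewrite mulrA ler_pdivlMr // mulrC //.
have : 0 <= (g * sh - 2 * a * l1) ^+ 2 by apply: sqr_ge0.
have : X ^+ 2 - Y ^+ 2 <= - g * sh ^+ 2 by rewrite /g; lra.
move=> h2 h3.
have : g * (X ^+ 2 - Y ^+ 2) <= g * (- g * sh ^+ 2) by apply: ler_wpM2l => //; lra.
have : g * (2 * T) <= g * (4 * a * l1 * sh) by apply: ler_wpM2l; [lra | nra].
nra.
Qed.

Lemma arithIII (X Y a sD T : R) : 0 <= X -> 0 <= Y -> 0 <= a -> 0 <= sD ->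
  X <= Y -> X <= sD -> T <= a * (X + Y) ->
  X ^+ 2 - Y ^+ 2 + 2 * T <= Num.max (4 * a * sD) (4 * a ^+ 2).
Proof.
move=> X0 Y0 a0 s0 XY XD hT.
have hT2 : 2 * T <= 2 * a * X + 2 * a * Y by lra.
case: (leP a sD) => asD.
  rewrite le_max; apply/orP; left.
  case: (leP Y sD) => YD.
    have : a * X <= a * Y by apply: ler_wpM2l.
    have : a * Y <= a * sD by apply: ler_wpM2l.
    nra.
  have : X ^+ 2 + 2 * a * X <= sD ^+ 2 + 2 * a * sD.
    have : a * X <= a * sD by apply: ler_wpM2l.
    nra.
  have : (Y - sD) * (Y + sD - 2 * a) >= 0 by apply: mulr_ge0; lra.
  nra.
rewrite le_max; apply/orP; right.
have : a * X <= a * a by apply: ler_wpM2l => //; lra.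
have : 0 <= (Y - a) ^+ 2 by apply: sqr_ge0.
nra.
Qed.

End Arith.

Theorem proposition1 (R : rcfType) (M r : nat) (C E pi : 'M[R]_M)
  (lam sE : seq R) :
  (1 <= r <= M)%N ->
  is_svals C lam ->
  is_svals E sE ->
  is_orth_proj r pi ->
  (forall P : 'M[R]_M, is_orth_proj r P -> hs2 (P *m C) <= hs2 (pi *m C)) ->
  let rM : R := (minn r (M - r))%:R in
  let l1 := lam_ lam 1 in
  let lr := lam_ lam r in
  let lr1 := lam_ lam r.+1 in
  let s1 := lam_ sE 1 in
  forall P : 'M[R]_M, is_orth_proj r P ->
    [/\ Z1 C E P pi <= 4 * rM * l1 * s1,
        lr1 < lr ->
          Z1 C E P pi <= 4 * rM * (l1 ^+ 2 / (lr ^+ 2 - lr1 ^+ 2)) * s1 ^+ 2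
      & 0 < lr ->
          Z1 C E P pi <= Num.max (4 * Num.sqrt (rM * Delta lam r) * (l1 / lr) * s1)
                                 (8 * rM * (l1 ^+ 2 / lr ^+ 2) * s1 ^+ 2)].
Proof.
move=> /andP[r1 rn] svC svE [spi ipi rkpi] hmax rM l1 lr lr1 s1 P [sP iP rkP].
have ppi : proj pi by split.
have pP : proj P by split.
have trpi : \tr pi = r%:R by rewrite tr_idem // rkpi.
have trP : \tr P = r%:R by rewrite tr_idem // rkP.
have [sz so al _] := svC.
have [_ soE alE _] := svE.
have [U [V [oU oU' oV oV' [eC eA eB]]]] := svd_facts svC.
have [psdA _] := svd_bound svC.
have [psdE1 psdE2] := svd_bound svE.
have pp0 := proj_pi0 r oU.
have op0 : is_orth_proj r (pi0 r U).
  case: (pp0) => s0 i0; split=> //.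
  have := tr_idem i0; rewrite tr_pi0 // => /eqP; rewrite eqr_nat => /eqP <- //.
have hmax0 : \tr (pi0 r U *m (C *m C^T)) <= \tr (pi *m (C *m C^T)).
  have := hmax _ op0; change (hs (pi0 r U *m C) <= hs (pi *m C) -> 
     \tr (pi0 r U *m (C *m C^T)) <= \tr (pi *m (C *m C^T))).
  by rewrite !hsQC.
have hPP : hs (P *m C) <= hs (pi *m C) by exact: hmax P (And3 sP iP rkP).
set x2 := hs (X1 C pi P); set y2 := hs (X2 C pi P).
set t1 := \tr (E^T *m X1 C pi P); set t2 := \tr (E^T *m X2 C pi P).
set hh := h pi P.
have eZ : Z1 C E P pi = x2 - y2 + 2 * (t1 - t2).
  rewrite /Z1 (T_split C pi P E).
  change (hs (P *m C) - hs (pi *m C) + 2 * (t1 - t2) = x2 - y2 + 2 * (t1 - t2)).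
  by rewrite (hs_diff rn so al ppi trpi oU oU' eA hmax0 pP).
have T1 := T1_bound rn so al ppi trpi oU oU' eA hmax0 pP trP oV eC psdE1 psdE2.
have T2 := T2_bound rn so al ppi trpi oU oU' eA hmax0 pP trP oV eC psdE1 psdE2.
have hx2 := x2_le ppi pP psdA; have hy2 := y2_le ppi trpi pP trP psdA.
have hD := x2_Delta rn so al ppi trpi oU oU' eA hmax0 pP trP sz.
have gx := gap_x2 rn so al ppi trpi oU oU' eA hmax0 pP.
have gy := gap_y2 rn so al ppi trpi oU oU' eA hmax0 pP trP.
have hr := h_le_r ppi pP trP; have hnr := h_le_nr rn ppi trpi pP.
have h0 := h_ge0 ppi pP.
have xy : x2 <= y2.
  have := hPP; rewrite -subr_le0 (hs_diff rn so al ppi trpi oU oU' eA hmax0 pP).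
  by rewrite subr_le0.

have s0 : 0 <= sE`_0 by apply: seq_ge0.
have el1 : l1 = lam`_0 by [].
have elr : lr = lam`_r.-1 by [].
have elr1 : lr1 = lam`_r by [].
have es1 : s1 = sE`_0 by [].
have l10 : 0 <= l1 by rewrite el1; apply: seq_ge0.
have rM0 : 0 <= rM by apply: ler0n.
have hrM : hh <= rM by rewrite /rM; case: (leqP r (M - r)).
set sr := Num.sqrt rM; set a := sr * sE`_0.
have sr0 : 0 <= sr by apply: sqrtr_ge0.
have a0 : 0 <= a by apply: mulr_ge0.
have esr : sr ^+ 2 = rM by rewrite sqr_sqrtr.
have x0 : 0 <= x2 by apply: hs_ge0.
have y0 : 0 <= y2 by apply: hs_ge0.
set X := Num.sqrt x2; set Y := Num.sqrt y2; set sh := Num.sqrt hh.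
have X0 : 0 <= X by apply: sqrtr_ge0.
have Y0 : 0 <= Y by apply: sqrtr_ge0.
have sh0 : 0 <= sh by apply: sqrtr_ge0.
have eX : X ^+ 2 = x2 by rewrite sqr_sqrtr.
have eY : Y ^+ 2 = y2 by rewrite sqr_sqrtr.
have esh : sh ^+ 2 = hh by rewrite sqr_sqrtr.
have ta1 : t1 <= a * X.
  apply: sq_le; first exact: mulr_ge0.
  by rewrite !exprMn esr eX.
have ta2 : - t2 <= a * Y.
  apply: sq_le; first exact: mulr_ge0.
  by rewrite sqrrN !exprMn esr eY.
have Tb : t1 - t2 <= a * (X + Y) by rewrite mulrDr; lra.
have Xl : X <= l1 * sh.
  apply: sq_le; first exact: mulr_ge0.
  by rewrite exprMn eX esh.
have Yl : Y <= l1 * sh.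
  apply: sq_le; first exact: mulr_ge0.
  by rewrite exprMn eY esh.
have shr : sh <= sr by apply: sq_le => //; rewrite esh esr.
have XY2 : X ^+ 2 <= Y ^+ 2 by rewrite eX eY.
rewrite eZ -eX -eY; split.
- apply: le_trans (@arithI R X Y a l1 sh sr (t1 - t2) X0 Y0 a0 l10 sh0 shr Xl Yl XY2 Tb) _.
  suff -> : 4 * a * l1 * sr = 4 * rM * l1 * s1 by [].
  by rewrite /a -esr es1; ring.
- move=> hlt.
  have bc : lam`_r ^+ 2 < lam`_r.-1 ^+ 2.
    have := seq_ge0 al r; rewrite elr elr1 in hlt; nra.
  have hx := gx bc; have hy := gy bc.
  have hXb : X ^+ 2 <= lam`_r ^+ 2 * sh ^+ 2 by rewrite eX esh.
  have hYc : lam`_r.-1 ^+ 2 * sh ^+ 2 <= Y ^+ 2 by rewrite eY esh.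
  apply: le_trans (@arithII R X Y a l1 sh _ _ (t1 - t2) X0 Y0 a0 l10 sh0 bc Xl Yl hXb hYc Tb) _.
  suff -> : 4 * a ^+ 2 * (l1 ^+ 2 / (lam`_r.-1 ^+ 2 - lam`_r ^+ 2)) =
            4 * rM * (l1 ^+ 2 / (lr ^+ 2 - lr1 ^+ 2)) * s1 ^+ 2 by [].
  by rewrite /a exprMn esr elr elr1 es1; ring.
- move=> lr0.
  have eD : Delta lam r = \sum_(r <= i < 2 * r) lam`_i ^+ 2.
    rewrite /Delta -addn1 -[(2 * r).+1]addn1 big_addn addnK.
    by apply: eq_big_nat => i _; rewrite /lam_ addn1.
  have D0 : 0 <= Delta lam r by rewrite eD; apply: sumr_ge0 => i _; apply: sqr_ge0.
  set sD := Num.sqrt (Delta lam r).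
  have sD0 : 0 <= sD by apply: sqrtr_ge0.
  have XD : X <= sD by apply: sq_le => //; rewrite eX sqr_sqrtr // eD.
  have XY : X <= Y by apply: sq_le.
  apply: le_trans (@arithIII R X Y a sD (t1 - t2) X0 Y0 a0 sD0 XY XD Tb) _.
  have lrl1 : lr <= l1 by rewrite elr el1; apply: seq_mono.
  have q1 : 1 <= l1 / lr by rewrite ler_pdivlMr // mul1r.
  have q2 : 1 <= l1 ^+ 2 / lr ^+ 2 by rewrite -expr_div_n; apply: exprn_ege1.
  rewrite ge_max; apply/andP; split; rewrite le_max; apply/orP; [left|right].
    rewrite sqrtrM // -/sr -/sD /a es1.
    have : 0 <= 4 * sr * sD * sE`_0 by apply: mulr_ge0 => //; apply: mulr_ge0 => //; apply: mulr_ge0.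
    nra.
  rewrite /a exprMn esr es1.
  have : 0 <= rM * sE`_0 ^+ 2 by apply: mulr_ge0 => //; apply: sqr_ge0.
  nra.
Qed.
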